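(* Let $g$ be a blurred permutation on $[n]$ with associated partition $P_1,\dots,P_m$, and let $f$ be a multipermutation on $[n]$ that does not respect $g$. Then either $(f\circ g)\circ(g^{-1}\circ f^{-1})$ or $(f^{-1}\circ g^{-1})\circ(g\circ f)$ is a reflexive and symmetric multipermutation that is not a sub-multipermutation of $g$.
   Context: A multipermutation on $[n]$ is a map $f:[n]\to\mathcal{P}([n])\setminus\{\emptyset\}$ with every $y$ in some $f(x)$; $f^{-1}:x\mapsto\{y:x\in f(y)\}$; $(g\circ f)(x)=\{z:\exists y\,(y\in f(x)\wedge z\in g(y))\}$; $f$ is a sub-multipermutation of $h$ if $f(x)\subseteq h(x)$ for all $x$; symmetric means $a\in f(b)\iff b\in f(a)$, reflexive means $a\in f(a)$ for all $a$. A blurred permutation $g$ with associated partition $P_1,\dots,P_m$ is one for which there is a permutation $\sigma$ of $[m]$ ($m\le n$) with $i\in P_i$ for $i\in[m]$ and $g(x)=P_{\sigma(i)}$ for all $x\in P_i$. A multipermutation $f$ respects $g$ if neither (i) there exist $a,b$ in the same block $P_i$ and $c,d$ in distinct blocks with $c\in f(a)$, $d\in f(b)$, nor (ii) there exist $a,b$ in distinct blocks and $c,d$ in the same block with $c\in f(a)$, $d\in f(b)$. *)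

(* Defs.v *)
(* [n] is modelled as 'I_n (elements 0..n-1). *)
From mathcomp Require Import all_boot all_fingroup.
Set Implicit Arguments. Unset Strict Implicit. Unset Printing Implicit Defensive.

Definition mperm (n : nat) := 'I_n -> {set 'I_n}.

Definition is_multiperm n (f : mperm n) : Prop :=
  (forall x, f x != set0) /\ (forall y, exists x, y \in f x).

Definition minv n (f : mperm n) : mperm n := fun x => [set y | x \in f y].

Definition mcomp n (g f : mperm n) : mperm n := fun x => [set z | [exists y, (y \in f x) && (z \in g y)]].

Definition sub_mperm n (f h : mperm n) : Prop := forall x, f x \subset h x.

Definition msym n (f : mperm n) : Prop := forall a b, (a \in f b) <-> (b \in f a).

Definition mrefl n (f : mperm n) : Prop := forall a, a \in f a.

Definition is_partition n m (P : 'I_m -> {set 'I_n}) : Prop :=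
  (forall i j, i != j -> [disjoint P i & P j]) /\ (forall x, exists i, x \in P i).

Definition blurred_with n m (g : mperm n) (P : 'I_m -> {set 'I_n}) : Prop :=
  m <= n /\ is_partition P /\
  (forall i : 'I_m, forall Hi : i < n, Ordinal Hi \in P i) /\
  exists s : {perm 'I_m}, forall (i : 'I_m) (x : 'I_n), x \in P i -> g x = P (s i).

Definition respects n m (f : mperm n) (P : 'I_m -> {set 'I_n}) : Prop :=
  ~ (exists (a b c d : 'I_n) (i j k : 'I_m),
        [/\ (a \in P i) && (b \in P i), c \in P j, d \in P k, j != k & (c \in f a) && (d \in f b)])
  /\
  ~ (exists (a b c d : 'I_n) (i j k : 'I_m),
        [/\ a \in P i, b \in P j, i != j, (c \in P k) && (d \in P k) & (c \in f a) && (d \in f b)]).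

(* Main.v *)
Require Import Defs.
From mathcomp Require Import all_boot all_fingroup.
From Stdlib Require Import Classical.

Section S.
Context {n m : nat}.

Lemma gen_ok (h : mperm n) (R : 'I_n -> 'I_n -> Prop) :
  (forall x z, z \in h x <-> R x z) -> (forall x z, R x z -> R z x) ->
  (forall x, R x x) -> [/\ is_multiperm h, mrefl h & msym h].
Proof.
move=> H Hs Hr; have rf : mrefl h by move=> a; apply/H.
split=> //.
- split=> [x|y]; last by exists y.
  by apply/set0Pn; exists x.
- by move=> a b; split=> /H /Hs /H.
Qed.

Lemma h1_mem (g f : mperm n) x z :
  z \in mcomp (mcomp f g) (mcomp (minv g) (minv f)) x <->
  exists y1 y2 y3, [/\ x \in f y1, y1 \in g y2, y3 \in g y2 & z \in f y3].
Proof.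
rewrite /mcomp /minv; split.
  rewrite inE => /existsP [w /andP [H1 H2]].
  move: H1 H2; rewrite !inE => /existsP [y1 /andP [H1 H2]] /existsP [y3 /andP [H3 H4]].
  rewrite !inE in H1 H2.
  by exists y1, w, y3.
move=> [y1 [y2 [y3 [H1 H2 H3 H4]]]].
rewrite inE; apply/existsP; exists y2; apply/andP; split.
  rewrite inE; apply/existsP; exists y1; by rewrite !inE H1 H2.
rewrite inE; apply/existsP; exists y3; by rewrite H3 H4.
Qed.

Lemma h2_mem (g f : mperm n) x z :
  z \in mcomp (mcomp (minv f) (minv g)) (mcomp g f) x <->
  exists y1 y2 y3, [/\ y1 \in f x, y2 \in g y1, y2 \in g y3 & y3 \in f z].
Proof.
rewrite /mcomp /minv; split.
  rewrite inE => /existsP [w /andP [H1 H2]].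
  move: H1 H2; rewrite !inE => /existsP [y1 /andP [H1 H2]] /existsP [y3 /andP [H3 H4]].
  rewrite !inE in H3 H4.
  by exists y1, w, y3.
move=> [y1 [y2 [y3 [H1 H2 H3 H4]]]].
rewrite inE; apply/existsP; exists y2; apply/andP; split.
  rewrite inE; apply/existsP; exists y1; by rewrite H1 H2.
rewrite inE; apply/existsP; exists y3; by rewrite !inE H3 H4.
Qed.

Lemma block_uniq {P : 'I_m -> {set 'I_n}} {x i j} :
  is_partition P -> x \in P i -> x \in P j -> i = j.
Proof.
move=> [Hd _] Hi Hj; apply/eqP; apply/negPn/negP => Hne.
have := Hd _ _ Hne; rewrite disjoint_subset => /subsetP /(_ x Hi).
by rewrite inE Hj.
Qed.

Lemma not_sub (g h : mperm n) (P : 'I_m -> {set 'I_n}) w x y i j :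
  blurred_with g P -> x \in P i -> y \in P j -> i != j ->
  x \in h w -> y \in h w -> ~ sub_mperm h g.
Proof.
move=> [_ [Hp [_ [s Hs]]]] Hx Hy Hij Hxw Hyw Hsub.
have [l Hl] := (Hp.2 w).
have Eg := Hs _ _ Hl.
have Hx' : x \in P (s l) by rewrite -Eg; apply: (subsetP (Hsub w)).
have Hy' : y \in P (s l) by rewrite -Eg; apply: (subsetP (Hsub w)).
have := block_uniq (P:=P) Hp Hx Hx'; have := block_uniq (P:=P) Hp Hy Hy'.
by move=> Ej Ei; rewrite Ei Ej eqxx in Hij.
Qed.

End S.

Theorem lemma3p5 (n m : nat) (g f : mperm n) (P : 'I_m -> {set 'I_n}) :
  is_multiperm g -> blurred_with g P ->
  is_multiperm f -> ~ respects f P ->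
  (let h := mcomp (mcomp f g) (mcomp (minv g) (minv f)) in
   [/\ is_multiperm h, mrefl h, msym h & ~ sub_mperm h g])
  \/
  (let h := mcomp (mcomp (minv f) (minv g)) (mcomp g f) in
   [/\ is_multiperm h, mrefl h, msym h & ~ sub_mperm h g]).
Proof.
move=> [gne gsurj] Hb [fne fsurj] Hnr.
have Hb' := Hb; move: Hb' => [Hmn [Hp [Hdiag [s Hs]]]].
have [A|B] : (exists (a b c d : 'I_n) (i j k : 'I_m),
        [/\ (a \in P i) && (b \in P i), c \in P j, d \in P k, j != k & (c \in f a) && (d \in f b)])
  \/ (exists (a b c d : 'I_n) (i j k : 'I_m),
        [/\ a \in P i, b \in P j, i != j, (c \in P k) && (d \in P k) & (c \in f a) && (d \in f b)]).
  case: (classic (exists (a b c d : 'I_n) (i j k : 'I_m),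
        [/\ (a \in P i) && (b \in P i), c \in P j, d \in P k, j != k & (c \in f a) && (d \in f b)])) => [H|H]; first by left.
  case: (classic (exists (a b c d : 'I_n) (i j k : 'I_m),
        [/\ a \in P i, b \in P j, i != j, (c \in P k) && (d \in P k) & (c \in f a) && (d \in f b)])) => [H'|H']; first by right.
  by case: Hnr; split.
- left => /=.
  have [H1 H2 H3] := gen_ok _ _ (h1_mem g f)
    ltac:(by move=> x z [y1 [y2 [y3 [a b c d]]]]; exists y3, y2, y1)
    ltac:(move=> x; have [y1 Hy1] := fsurj x; have [y2 Hy2] := gsurj y1;
          by exists y1, y2, y1).
  split=> //.
  move: A => [a [b [c [d [i [j [k [/andP [Ha Hb2] Hc Hd Hjk /andP [Hca Hdb]]]]]]]]].
  have Hlt : s^-1%g i < n by apply: leq_trans (ltn_ord _) Hmn.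
  have Ey := Hs _ _ (Hdiag _ Hlt).
  rewrite permKV in Ey.
  apply: (@not_sub _ _ _ _ _ c _ _ _ _ Hb Hc Hd Hjk).
    by apply/h1_mem; exists a, (Ordinal Hlt), a; rewrite Ey.
  by apply/h1_mem; exists a, (Ordinal Hlt), b; rewrite Ey.
- right => /=.
  have Hr : forall x, exists y1 y2 y3, [/\ y1 \in f x, y2 \in g y1, y2 \in g y3 & y3 \in f x].
    move=> x; have /set0Pn [y1 Hy1] := fne x.
    have /set0Pn [y2 Hy2] := gne y1.
    by exists y1, y2, y1.
  have [H1 H2 H3] := gen_ok _ _ (h2_mem g f)
    ltac:(by move=> x z [y1 [y2 [y3 [a b c d]]]]; exists y3, y2, y1) Hr.
  split=> //.
  move: B => [a [b [c [d [i [j [k [Ha Hb2 Hij /andP [Hc Hd] /andP [Hca Hdb]]]]]]]]].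
  have Ec := Hs _ _ Hc; have Ed := Hs _ _ Hd.
  have /set0Pn [w Hw] := gne c.
  apply: (@not_sub _ _ _ _ _ a _ _ _ _ Hb Ha Hb2 Hij).
    by apply/h2_mem; have [y1 [y2 [y3 []]]] := Hr a; exists y1, y2, y3.
  by apply/h2_mem; exists c, w, d; rewrite // Ed -Ec.
Qed.
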